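(* Let $n\ge3$ and $\ell\in\{1,\dots,n-2\}$. Then $$\Gamma_{\{\ell+1,\ell+2\}}^2+\Gamma_{[\ell+2]\setminus\{\ell+1\}}^2=\Gamma_{[\ell+2]}^2-\Gamma_{[\ell+1]}^2+\Gamma_{[\ell]}^2+\Gamma_{\{\ell+2\}}^2+\Gamma_{\{\ell+1\}}^2-\tfrac14 .$$
   Context: Fix $n\ge1$ and real parameters $\mu_1,\dots,\mu_n>0$; write $[\ell]=\{1,\dots,\ell\}$. For $i\in[n]$, $r_i$ is the reflection $(r_if)(x)=f(x_1,\dots,-x_i,\dots,x_n)$ and $T_i=\partial_{x_i}+\frac{\mu_i}{x_i}(1-r_i)$. $\mathcal{C}\ell_n$ is generated by $e_1,\dots,e_n$ with $e_ie_j+e_je_i=-2\delta_{ij}$, $V$ is a fixed left $\mathcal{C}\ell_n$-module, and operators act on $\mathcal{P}(\mathbb{R}^n)\otimes V$ with $x_i,T_i,r_i$ acting on the polynomial factor and $e_i$ on $V$. For $A\subseteq[n]$: $\underline{D}_A=\sum_{i\in A}e_iT_i$, $\underline{x}_A=\sum_{i\in A}e_ix_i$, $\underline{S}_A=\frac12([\underline{x}_A,\underline{D}_A]-1)$, $\Gamma_A=\underline{S}_A\prod_{i\in A}r_i$ (empty sums $0$, empty products $1$); note $\Gamma_{\{k\}}=\mu_k$. *)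

(* Defs.v *)
From HB Require Import structures.
From mathcomp Require Import all_boot all_order all_algebra.
Set Implicit Arguments. Unset Strict Implicit. Unset Printing Implicit Defensive.
Import Order.TTheory GRing.Theory Num.Theory.
Local Open Scope ring_scope.

(* Elements of P(R^n) (x) V are represented by their coefficient maps:
   f = sum_alpha F(alpha) x^alpha, with F : mono n -> V (finitely supported).
   Indices i : 'I_n are 0-based: 'I_n index i stands for the paper's i+1. *)
Definition mono (n : nat) := 'I_n -> nat.
Definition elt (n : nat) (V : Type) := mono n -> V.

Section Ops.
Variables (R : realFieldType) (n : nat) (V : lmodType R).

Definition upd (a : mono n) (i : 'I_n) (g : nat -> nat) : mono n :=
  fun k => if k == i then g (a k) else a k.

Definition finsupp (F : elt n V) : Prop :=
  exists N : nat, forall a : mono n, (exists i, (N < a i)%N) -> F a = 0.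

Definition mulx (i : 'I_n) (F : elt n V) : elt n V :=
  fun a => if (0 < a i)%N then F (upd a i predn) else 0.
Definition refl (i : 'I_n) (F : elt n V) : elt n V :=
  fun a => ((-1) ^+ (a i)) *: F a.
Definition deriv (i : 'I_n) (F : elt n V) : elt n V :=
  fun a => ((a i).+1)%:R *: F (upd a i S).
(* division by x_i (exact on polynomials with no x_i-free monomials,
   which is the case for (1 - r_i) f) *)
Definition divx (i : 'I_n) (F : elt n V) : elt n V :=
  fun a => F (upd a i S).
Definition Dunkl (mu : 'I_n -> R) (i : 'I_n) (F : elt n V) : elt n V :=
  fun a => deriv i F a + mu i *: divx i (fun b => F b - refl i F b) a.

Definition cl (e : 'I_n -> {linear V -> V}) (i : 'I_n) (F : elt n V) : elt n V :=
  fun a => e i (F a).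

Definition DopA (mu : 'I_n -> R) (e : 'I_n -> {linear V -> V}) (A : {set 'I_n})
  (F : elt n V) : elt n V :=
  fun a => \sum_(i in A) cl e i (Dunkl mu i F) a.
Definition XopA (e : 'I_n -> {linear V -> V}) (A : {set 'I_n})
  (F : elt n V) : elt n V :=
  fun a => \sum_(i in A) cl e i (mulx i F) a.
Definition SopA (mu : 'I_n -> R) (e : 'I_n -> {linear V -> V}) (A : {set 'I_n})
  (F : elt n V) : elt n V :=
  fun a => 2^-1 *: (XopA e A (DopA mu e A F) a - DopA mu e A (XopA e A F) a - F a).
Definition reflA (A : {set 'I_n}) (F : elt n V) : elt n V :=
  foldr (fun i G => refl i G) F (enum A).
Definition Gam (mu : 'I_n -> R) (e : 'I_n -> {linear V -> V}) (A : {set 'I_n})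
  (F : elt n V) : elt n V := SopA mu e A (reflA A F).
Definition Gam2 mu e A F := Gam mu e A (Gam mu e A F).

(* 1-based index sets: [m] = {1..m} corresponds to 0-based {k | k < m} *)
Definition setup (m : nat) : {set 'I_n} := [set k : 'I_n | (k < m)%N].
(* the paper's singleton {j} (1-based) *)
Definition sing1 (j : nat) : {set 'I_n} := [set k : 'I_n | (k : nat) == j.-1].

Definition clifford_rel (e : 'I_n -> {linear V -> V}) : Prop :=
  forall (i j : 'I_n) (v : V),
    e i (e j v) + e j (e i v) = - ((if i == j then 2 else 0) *: v).
End Ops.

(* Main.v *)
Require Import Defs.
From HB Require Import structures.
From mathcomp Require Import all_boot all_order all_algebra.
From mathcomp Require Import boolp zify.
Set Implicit Arguments. Unset Strict Implicit. Unset Printing Implicit Defensive.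
Import Order.TTheory GRing.Theory Num.Theory.
Local Open Scope ring_scope.
Module ZS.
Local Open Scope ring_scope.

Section ZSolve.
Variable V : zmodType.
Inductive zexp := ZA of nat | ZAdd of zexp & zexp | ZOpp of zexp | Z0 | ZMn of zexp & nat.
Fixpoint zeval (env : seq V) (e : zexp) : V :=
  match e with
  | ZA k => nth 0 env k
  | ZAdd a b => zeval env a + zeval env b
  | ZOpp a => - zeval env a
  | Z0 => 0
  | ZMn a m => zeval env a *+ m
  end.
Fixpoint addl (l1 l2 : seq int) : seq int :=
  match l1, l2 with
  | c1 :: l1', c2 :: l2' => (c1 + c2) :: addl l1' l2'
  | [::], _ => l2
  | _, [::] => l1
  end.
Definition sclz (c : int) (l : seq int) := [seq c * x | x <- l].
Fixpoint norm (e : zexp) : seq int :=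
  match e with
  | ZA k => rcons (nseq k 0) 1
  | ZAdd a b => addl (norm a) (norm b)
  | ZOpp a => sclz (-1) (norm a)
  | Z0 => [::]
  | ZMn a m => sclz m%:Z (norm a)
  end.
Fixpoint evl (env : seq V) (l : seq int) : V :=
  match l with
  | c :: l' => (nth 0 env 0) *~ c + evl (behead env) l'
  | [::] => 0
  end.
Lemma evl_add env l1 l2 : evl env (addl l1 l2) = evl env l1 + evl env l2.
Proof.
elim: l1 l2 env => [|c1 l1 IH] [|c2 l2] env /=; rewrite ?addr0 ?add0r //.
by rewrite IH mulrzDr addrACA.
Qed.
Lemma evl_scl env c l : evl env (sclz c l) = evl env l *~ c.
Proof.
elim: l env => [|c1 l IH] env /=; first by rewrite mul0rz.
by rewrite IH mulrzDl (mulrC c) mulrzA.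
Qed.
Lemma evl_atom env k : evl env (rcons (nseq k 0) 1) = nth 0 env k.
Proof.
elim: k env => [|k IH] env /=; first by rewrite addr0 mulr1z; case: env.
by rewrite IH mulr0z add0r; case: env => //= ; rewrite nth_nil.
Qed.
Lemma norm_ok env e : zeval env e = evl env (norm e).
Proof.
elim: e => [k|a IHa b IHb|a IHa||a IHa m] /=.
- by rewrite evl_atom.
- by rewrite evl_add IHa IHb.
- by rewrite evl_scl IHa mulrN1z.
- by [].
- by rewrite evl_scl IHa -pmulrn.
Qed.
Lemma evl_zero env l : all (fun c => c == 0) l -> evl env l = 0.
Proof.
elim: l env => [|c l IH] env //= /andP[/eqP -> H]; by rewrite mulr0z add0r IH.
Qed.
Lemma zsound env e1 e2 :
  all (fun c => c == 0) (addl (norm e1) (sclz (-1) (norm e2))) ->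
  zeval env e1 = zeval env e2.
Proof.
move=> H; apply/eqP; rewrite -subr_eq0 !norm_ok.
by rewrite -(evl_zero env H) evl_add evl_scl mulrN1z.
Qed.
End ZSolve.

Ltac zmem_s x l :=
  lazymatch l with
  | x :: _ => constr:(true)
  | _ :: ?l' => zmem_s x l'
  | nil => constr:(false)
  end.
Ltac zmem_u x l :=
  match l with
  | ?y :: _ => constr:(ltac:(unify x y; exact true))
  | _ :: ?l' => zmem_u x l'
  | nil => constr:(false)
  end.
Ltac zmem x l :=
  let b := zmem_s x l in
  lazymatch b with true => constr:(true) | false => zmem_u x l end.
Ltac zidx_s x l :=
  lazymatch l with
  | x :: _ => constr:(0%N)
  | _ :: ?l' => let k := zidx_s x l' in constr:(S k)
  end.
Ltac zidx_u x l :=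
  match l with
  | ?y :: _ => constr:(ltac:(unify x y; exact 0%N))
  | _ :: ?l' => let k := zidx_u x l' in constr:(S k)
  end.
Ltac zidx x l :=
  let b := zmem_s x l in
  lazymatch b with true => zidx_s x l | false => zidx_u x l end.
Ltac zatoms t l :=
  lazymatch t with
  | ?a + ?b => let l1 := zatoms a l in zatoms b l1
  | - ?a => zatoms a l
  | 0 => l
  | ?a *+ _ => zatoms a l
  | _ => let b := zmem t l in
         lazymatch b with true => l | false => constr:(t :: l) end
  end.
Ltac zreify t l :=
  lazymatch t with
  | ?a + ?b => let ra := zreify a l in let rb := zreify b l in constr:(ZAdd ra rb)
  | - ?a => let ra := zreify a l in constr:(ZOpp ra)
  | 0 => constr:(Z0)
  | ?a *+ ?m => let ra := zreify a l in constr:(ZMn ra m)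
  | _ => let k := zidx t l in constr:(ZA k)
  end.
Ltac zsolve :=
  lazymatch goal with
  | |- @eq ?T ?lhs ?rhs =>
    let l0 := constr:(@nil T) in
    let l1 := zatoms lhs l0 in
    let l := zatoms rhs l1 in
    let e1 := zreify lhs l in
    let e2 := zreify rhs l in
    change (zeval l e1 = zeval l e2); apply: zsound; vm_compute; reflexivity
  end.


End ZS.

Module S1.
Import ZS.
Local Open Scope ring_scope.

Section Ring.
Variables (R : realFieldType) (n : nat) (V : lmodType R).
Local Notation W := (elt n V).
Definition lin (f : W -> W) := forall (k : R) (F G : W),
  f (fun a => k *: F a + G a) = (fun a => k *: f F a + f G a).
Record lop := Lop { app :> W -> W; appL : lin app }.
Lemma lopE (f g : lop) : (forall F a, f F a = g F a) -> f = g.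
Proof.
case: f g => f fL [g gL] /= H.
have ? : f = g by apply: funext => F; apply: funext => a; apply: H.
subst; congr Lop; exact: Prop_irrelevance.
Qed.
Lemma linD (f : lop) F G a : f (fun b => F b + G b) a = f F a + f G a.
Proof.
have -> : (fun b => F b + G b) = (fun b => 1 *: F b + G b).
  by apply: funext => b; rewrite scale1r.
by rewrite appL scale1r.
Qed.
Lemma linZ (f : lop) k F a : f (fun b => k *: F b) a = k *: f F a.
Proof.
have H := appL f k F (fun _ => 0).
have H0 : f (fun _ => 0) a = 0.
  have := appL f 1 (fun _ => 0) (fun _ => 0) => /(congr1 (fun h => h a)).
  have -> : (fun _ : mono n => 1 *: (0:V) + 0) = (fun _ => 0).
    by apply: funext => b; rewrite scaler0 addr0.
  rewrite scale1r => H1; apply: (@addrI _ (f (fun _ => 0) a)).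
  by rewrite addr0 -H1.
move/(congr1 (fun h => h a)): H; rewrite H0 addr0 => <-.
by congr (f _ a); apply: funext => b; rewrite addr0.
Qed.
Lemma lin0 (f : lop) a : f (fun _ => 0) a = 0.
Proof.
have -> : (fun _ : mono n => (0:V)) = (fun b => 0 *: (0 : V)) by apply: funext => b; rewrite scale0r.
by rewrite linZ scale0r.
Qed.
Lemma linN (f : lop) F a : f (fun b => - F b) a = - f F a.
Proof.
have -> : (fun b => - F b) = (fun b => (-1) *: F b) by apply: funext => b; rewrite scaleN1r.
by rewrite linZ scaleN1r.
Qed.

Definition addO (f g : lop) : lop.
refine (@Lop (fun F a => f F a + g F a) _).
by move=> k F G; apply: funext => a; rewrite !appL scalerDr addrACA.
Defined.
Definition oppO (f : lop) : lop.
refine (@Lop (fun F a => - f F a) _).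
by move=> k F G; apply: funext => a; rewrite !appL scalerN opprD.
Defined.
Definition zeroO : lop.
refine (@Lop (fun F a => 0) _).
by move=> k F G; apply: funext => a; rewrite scaler0 addr0.
Defined.
Definition oneO : lop.
refine (@Lop (fun F => F) _).
by [].
Defined.
Definition mulO (f g : lop) : lop.
refine (@Lop (fun F => f (g F)) _).
by move=> k F G; rewrite !appL.
Defined.

HB.instance Definition _ := gen_eqMixin lop.
HB.instance Definition _ := gen_choiceMixin lop.
Lemma addOA : associative addO. Proof. by move=> f g h; apply: lopE => F a /=; rewrite addrA. Qed.
Lemma addOC : commutative addO. Proof. by move=> f g; apply: lopE => F a /=; rewrite addrC. Qed.
Lemma add0O : left_id zeroO addO. Proof. by move=> f; apply: lopE => F a /=; rewrite add0r. Qed.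
Lemma addNO : left_inverse zeroO oppO addO. Proof. by move=> f; apply: lopE => F a /=; rewrite addNr. Qed.
HB.instance Definition _ := GRing.isZmodule.Build lop addOA addOC add0O addNO.
Lemma mulOA : associative mulO. Proof. by move=> f g h; apply: lopE. Qed.
Lemma mul1O : left_id oneO mulO. Proof. by move=> f; apply: lopE. Qed.
Lemma mulO1 : right_id oneO mulO. Proof. by move=> f; apply: lopE. Qed.
Lemma mulODl : left_distributive mulO addO. Proof. by move=> f g h; apply: lopE. Qed.
Lemma mulODr : right_distributive mulO addO.
Proof. by move=> f g h; apply: lopE => F a /=; rewrite linD. Qed.
HB.instance Definition _ := GRing.Zmodule_isPzRing.Build lop mulOA mul1O mulO1 mulODl mulODr.

Lemma mulE (f g : lop) F a : (f * g) F a = f (g F) a. Proof. by []. Qed.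
Lemma addE (f g : lop) F a : (f + g) F a = f F a + g F a. Proof. by []. Qed.
Lemma oppE (f : lop) F a : (- f) F a = - f F a. Proof. by []. Qed.
Lemma oneE F a : (1 : lop) F a = F a. Proof. by []. Qed.
Lemma zeroE F a : (0 : lop) F a = 0. Proof. by []. Qed.
Lemma sumE I (r : seq I) (P : pred I) (f : I -> lop) F a :
  (\sum_(i <- r | P i) f i) F a = \sum_(i <- r | P i) f i F a.
Proof. by elim/big_rec2: _ => // i x y _ <-. Qed.

Variables (mu : 'I_n -> R) (e : 'I_n -> {linear V -> V}).
Hypothesis hcl : clifford_rel e.

Lemma upd_i (a : mono n) i g : upd a i g i = g (a i).
Proof. by rewrite /upd eqxx. Qed.
Lemma upd_o (a : mono n) i j g : j != i -> upd a i g j = a j.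
Proof. by rewrite /upd => /negbTE ->. Qed.
Lemma updC (a : mono n) i j g h : i != j -> upd (upd a i g) j h = upd (upd a j h) i g.
Proof.
move=> ij; apply: funext => k; rewrite /upd.
case: (eqVneq k j) => [->|kj]; first by rewrite (negbTE (ltac:(by rewrite eq_sym) : j != i)).
by case: (eqVneq k i).
Qed.
Lemma upd_SP (a : mono n) i : upd (upd a i S) i predn = a.
Proof. by apply: funext => k; rewrite /upd; case: (eqVneq k i) => [->|] ; rewrite ?eqxx. Qed.
Lemma upd_PS (a : mono n) i : (0 < a i)%N -> upd (upd a i predn) i S = a.
Proof.
move=> h; apply: funext => k; rewrite /upd; case: (eqVneq k i) => [->|]; rewrite ?eqxx //.
by case: (a i) h.
Qed.

Definition dc (i : 'I_n) (m : nat) : R := m.+1%:R + mu i * (1 - (-1) ^+ m.+1).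
Lemma DunklE i (F : W) a : Dunkl mu i F a = dc i (a i) *: F (upd a i S).
Proof.
rewrite /Dunkl /Defs.deriv /divx /refl upd_i /dc.
by rewrite scalerDl -scalerA scalerBl scale1r.
Qed.

Definition Xo (i : 'I_n) : lop.
refine (@Lop (mulx i) _).
by move=> k F G; apply: funext => a; rewrite /mulx; case: ifP; rewrite ?scaler0 ?addr0.
Defined.
Definition To (i : 'I_n) : lop.
refine (@Lop (Dunkl mu i) _).
by move=> k F G; apply: funext => a; rewrite !DunklE scalerDr !scalerA mulrC.
Defined.
Definition Ro (i : 'I_n) : lop.
refine (@Lop (refl i) _).
by move=> k F G; apply: funext => a; rewrite /refl scalerDr !scalerA mulrC.
Defined.
Definition Eo (i : 'I_n) : lop.
refine (@Lop (cl e i) _).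
by move=> k F G; apply: funext => a; rewrite /cl linearD linearZ.
Defined.

Lemma XXc i j : Xo i * Xo j = Xo j * Xo i.
Proof.
apply: lopE => F a /=; rewrite /mulx.
case: (eqVneq i j) => [->//|ij].
rewrite upd_o 1?eq_sym // upd_o // updC //.
by case: (0 < a i)%N; case: (0 < a j)%N.
Qed.
Lemma TTc i j : To i * To j = To j * To i.
Proof.
apply: lopE => F a /=.
case: (eqVneq i j) => [->//|ij].
by rewrite !DunklE !scalerA upd_o 1?eq_sym // upd_o // updC // mulrC.
Qed.
Lemma XTc i j : i != j -> Xo i * To j = To j * Xo i.
Proof.
move=> ij; apply: lopE => F a /=; rewrite /mulx !DunklE upd_o ?upd_o // 1?eq_sym //.
case: ifP; rewrite ?scaler0 // => _; by rewrite updC.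
Qed.
Lemma RXa i : Ro i * Xo i = - (Xo i * Ro i).
Proof.
apply: lopE => F a /=; rewrite /mulx /refl upd_i.
case E: (a i) => [|m] /=; first by rewrite scaler0 oppr0.
by rewrite exprS mulN1r scaleNr.
Qed.
Lemma RTa i : Ro i * To i = - (To i * Ro i).
Proof.
apply: lopE => F a /=; rewrite /refl !DunklE upd_i exprS !scalerA.
by rewrite mulN1r mulrN scaleNr opprK mulrC.
Qed.
Lemma RXc i j : i != j -> Ro i * Xo j = Xo j * Ro i.
Proof.
move=> ij; apply: lopE => F a /=; rewrite /mulx /refl.
by case: ifP; rewrite ?scaler0 // => _; rewrite upd_o.
Qed.
Lemma RTc i j : i != j -> Ro i * To j = To j * Ro i.
Proof.
move=> ij; apply: lopE => F a /=.
by rewrite /refl !DunklE upd_o // ?(eq_sym j) // !scalerA (mulrC (dc _ _)).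
Qed.
Lemma RRc i j : Ro i * Ro j = Ro j * Ro i.
Proof. by apply: lopE => F a /=; rewrite /refl !scalerA mulrC. Qed.
Lemma RR1 i : Ro i * Ro i = 1.
Proof. by apply: lopE => F a /=; rewrite /refl scalerA -expr2 sqrr_sign scale1r. Qed.
Lemma EXc i j : Eo i * Xo j = Xo j * Eo i.
Proof. by apply: lopE => F a /=; rewrite /cl /mulx; case: ifP; rewrite ?linear0. Qed.
Lemma ETc i j : Eo i * To j = To j * Eo i.
Proof. by apply: lopE => F a /=; rewrite /cl !DunklE linearZ. Qed.
Lemma ERc i j : Eo i * Ro j = Ro j * Eo i.
Proof. by apply: lopE => F a /=; rewrite /cl /refl linearZ. Qed.
Lemma EEa i j : i != j -> Eo i * Eo j = - (Eo j * Eo i).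
Proof.
move=> ij; apply: lopE => F a /=; rewrite /cl.
have := hcl i j (F a); rewrite (negbTE ij) scale0r oppr0 => /eqP.
by rewrite addr_eq0 => /eqP.
Qed.
Lemma EE1 i : Eo i * Eo i = -1.
Proof.
apply: lopE => F a /=; rewrite /cl.
have := hcl i i (F a); rewrite eqxx => H.
apply: (@scalerI _ _ (2 : R)); first by rewrite pnatr_eq0.
by rewrite scalerN -H scaler_nat mulr2n.
Qed.
End Ring.

End S1.

Module S2.
Import ZS.
Import S1.
Local Open Scope ring_scope.

Section Alg.
Variables (R : realFieldType) (n : nat) (V : lmodType R).
Variables (mu : 'I_n -> R) (e : 'I_n -> {linear V -> V}).
Hypothesis hcl : clifford_rel e.
Local Notation K := (lop n V).
Local Notation X := (@Xo R n V).
Local Notation T := (@To R n V mu).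
Local Notation E := (@Eo R n V e).

Fact EE_key : unit. Proof. by []. Qed.
Definition EE i j : K := locked_with EE_key (E i * E j).
Lemma EEE i j : EE i j = E i * E j. Proof. by rewrite /EE unlock. Qed.
Fact L_key : unit. Proof. by []. Qed.
Definition L i j : K := locked_with L_key (X i * T j - X j * T i).
Lemma LE i j : L i j = X i * T j - X j * T i. Proof. by rewrite /L unlock. Qed.
Fact N_key : unit. Proof. by []. Qed.
Definition N i : K := locked_with N_key (T i * X i - X i * T i).
Lemma NE i : N i = T i * X i - X i * T i. Proof. by rewrite /N unlock. Qed.
Fact w_key : unit. Proof. by []. Qed.
Definition w i j : K := locked_with w_key (EE i j * (X i * T j - T i * X j)).
Lemma wwE i j : w i j = EE i j * (X i * T j - T i * X j). Proof. by rewrite /w unlock. Qed.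
Fact h_key : unit. Proof. by []. Qed.
Definition h i j : K := locked_with h_key (w i j + w j i).
Lemma hhE i j : h i j = w i j + w j i. Proof. by rewrite /h unlock. Qed.
Definition ac (x y : K) := x * y + y * x.

Definition scal (f : K) := forall k, GRing.comm (E k) f.
Lemma scalX i : scal (X i). Proof. by move=> k; apply: EXc. Qed.
Lemma scalT i : scal (T i). Proof. by move=> k; apply: ETc. Qed.
Lemma scalD f g : scal f -> scal g -> scal (f + g).
Proof. by move=> hf hg k; apply: commrD. Qed.
Lemma scalN f : scal f -> scal (- f).
Proof. by move=> hf k; apply: commrN. Qed.
Lemma scalB f g : scal f -> scal g -> scal (f - g).
Proof. by move=> hf hg; apply: scalD => //; apply: scalN. Qed.
Lemma scalM f g : scal f -> scal g -> scal (f * g).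
Proof. by move=> hf hg k; apply: commrM. Qed.
Lemma scalL i j : scal (L i j).
Proof. by rewrite LE; apply: scalB; apply: scalM; (apply: scalX || apply: scalT). Qed.
Lemma scalNo i : scal (N i).
Proof. by rewrite NE; apply: scalB; apply: scalM; (apply: scalX || apply: scalT). Qed.
Lemma EEcomm f i j : scal f -> GRing.comm (EE i j) f.
Proof.
move=> hf; rewrite EEE; apply: commr_sym; apply: commrM; apply: commr_sym; exact: hf.
Qed.

Lemma Ea i j : i != j -> E i * E j = - (E j * E i).
Proof. exact: S1.EEa. Qed.
Lemma E1 i : E i * E i = -1.
Proof. exact: S1.EE1. Qed.
Lemma XTc' i j : i != j -> X i * T j = T j * X i.
Proof. exact: S1.XTc. Qed.
Lemma EEa i j : i != j -> EE j i = - EE i j.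
Proof. by move=> ij; rewrite !EEE Ea ?opprK // eq_sym. Qed.
Lemma EEii i : EE i i = -1.
Proof. rewrite EEE; exact: E1. Qed.

Lemma hE i j : i != j -> h i j = (EE i j * L i j) *+ 2.
Proof.
move=> ij; have ji : j != i by rewrite eq_sym.
rewrite hhE !wwE LE EEa // -(XTc' ij) -(XTc' ji).
by rewrite mulNr -mulrN opprB mulr2n.
Qed.
Lemma wE i : w i i = N i.
Proof. by rewrite wwE EEii mulN1r opprB NE. Qed.

Lemma EEsame p q r : EE p q * EE q r = - EE p r.
Proof.
by rewrite !EEE mulrA -(mulrA (E p)) E1 mulrN1 mulNr.
Qed.
Lemma EEfirst p q r : p != q -> EE p q * EE p r = EE q r.
Proof.
move=> pq; have qp : q != p by rewrite eq_sym.
rewrite !EEE mulrA -(mulrA (E p)) (Ea qp) mulrN mulNr mulrA E1 mulN1r mulNr opprK.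
by [].
Qed.
Lemma EElast p q r : q != r -> EE p r * EE q r = EE p q.
Proof.
move=> qr; have rq : r != q by rewrite eq_sym.
rewrite !EEE mulrA -(mulrA (E p)) (Ea rq) mulrN mulNr -!mulrA E1 mulrN1 mulrN opprK.
by [].
Qed.
Lemma EEcross p q r : p != q -> q != r -> r != p -> EE q r * EE p q = EE p r.
Proof.
move=> pq qr rp; have rq : r != q by rewrite eq_sym.
rewrite !EEE -!mulrA (Ea pq) !(mulrN, mulNr) (mulrA (E r)) (Ea rq) !(mulrN, mulNr).
rewrite !mulrA E1 mulN1r opprK mulNr (Ea rp) opprK.
by [].
Qed.

Lemma XXc' i j : X i * X j = X j * X i. Proof. exact: S1.XXc. Qed.
Lemma TTc' i j : T i * T j = T j * T i. Proof. exact: S1.TTc. Qed.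
Lemma cTX (x : K) q r : q != r -> x * T q * X r = x * X r * T q.
Proof. by move=> qr; rewrite -!mulrA (XTc' (ltac:(by rewrite eq_sym) : r != q)). Qed.
Lemma nTX (x : K) p : x * T p * X p = x * X p * T p + x * N p.
Proof. by rewrite NE -!mulrA -mulrDr addrC subrK. Qed.
Lemma cTT2 (x : K) i j : x * T i * T j = x * T j * T i.
Proof. by rewrite -!mulrA TTc'. Qed.
Lemma commXN q p : q != p -> X q * N p = N p * X q.
Proof.
move=> qp; rewrite NE; apply: commrB; apply: commrM => //; first exact: (XTc' qp).
- exact: XXc'.
- exact: XXc'.
exact: (XTc' qp).
Qed.
Lemma commTN q p : q != p -> T q * N p = N p * T q.
Proof.
move=> qp; have pq : p != q by rewrite eq_sym.
rewrite NE; apply: commrB; apply: commrM => //; first exact: TTc'.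
- exact: (esym (XTc' pq)).
- exact: (esym (XTc' pq)).
exact: TTc'.
Qed.

Lemma Kp p q s : p != q -> q != s -> s != p ->
  L p q * L p s - L p s * L p q = - (N p * L q s).
Proof.
move=> pq qs sp; have qp : q != p by rewrite eq_sym.
have sq : s != q by rewrite eq_sym. have ps : p != s by rewrite eq_sym.
rewrite !LE !mulrBl !mulrBr !mulrA !(nTX _ p) !mulrDl.
rewrite !cTX // (commXN qp) (commXN sp).
rewrite (XXc' s p) (XXc' q p) (XXc' s q) !(cTT2 _ s q) !(cTT2 _ q p) !(cTT2 _ s p).
zsolve.
Qed.

Lemma Pluck i j a b : i != j -> i != a -> i != b -> j != a -> j != b -> a != b ->
  L i j * L a b - L i a * L j b + L j a * L i b = 0.
Proof.
move=> ij ia ib ja jb ab.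
have ji : j != i by rewrite eq_sym. have ai : a != i by rewrite eq_sym.
have bi : b != i by rewrite eq_sym. have aj : a != j by rewrite eq_sym.
have bj : b != j by rewrite eq_sym. have ba : b != a by rewrite eq_sym.
rewrite !LE !mulrBl !mulrBr !mulrA !cTX //.
rewrite (XXc' a i) (XXc' a j) (XXc' j i) !(cTT2 _ a j) !(cTT2 _ a i) !(cTT2 _ j i).
zsolve.
Qed.

Lemma acC x y : ac x y = ac y x. Proof. by rewrite /ac addrC. Qed.
Lemma acMn2 x y : ac (x *+ 2) (y *+ 2) = ac x y *+ 4.
Proof. by rewrite /ac !(mulrnAl, mulrnAr) -!mulrnA -mulrnDl. Qed.
Lemma acMnr x y : ac x (y *+ 2) = ac x y *+ 2.
Proof. by rewrite /ac !(mulrnAl, mulrnAr) -mulrnDl. Qed.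
Lemma ac_EE p q r s f g : scal f -> scal g ->
  ac (EE p q * f) (EE r s * g) = EE p q * EE r s * (f * g) + EE r s * EE p q * (g * f).
Proof.
move=> hf hg; rewrite /ac !mulrA -(mulrA (EE p q) f) -(EEcomm r s hf) -(mulrA (EE r s) g).
by rewrite -(EEcomm p q hg) !mulrA.
Qed.
Lemma ac_NEE k r s f : scal f -> GRing.comm (N k) f ->
  ac (N k) (EE r s * f) = (EE r s * (N k * f)) *+ 2.
Proof.
move=> hf hNf; rewrite /ac mulrA -(EEcomm r s (scalNo k)) -!mulrA -hNf.
by rewrite mulr2n.
Qed.
Lemma cXL p r s : p != r -> p != s -> GRing.comm (X p) (L r s).
Proof.
move=> pr ps; rewrite LE; apply: commrB; apply: commrM; try exact: XXc'; exact: XTc'.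
Qed.
Lemma cTL q r s : q != r -> q != s -> GRing.comm (T q) (L r s).
Proof.
move=> qr qs; rewrite LE; apply: commrB; apply: commrM; try exact: TTc';
  apply: esym; apply: XTc'; by rewrite eq_sym.
Qed.
Lemma Ldisj p q r s : p != r -> p != s -> q != r -> q != s ->
  L p q * L r s = L r s * L p q.
Proof.
move=> pr ps qr qs; rewrite [L p q]LE; apply: commr_sym.
by apply: commrB; apply: commrM; apply: commr_sym; ((apply: cXL; done) || (apply: cTL; done)).
Qed.
Lemma cNL k r s : k != r -> k != s -> GRing.comm (N k) (L r s).
Proof.
move=> kr ks; rewrite NE; apply: commr_sym.
by apply: commrB; apply: commrM; apply: commr_sym; ((apply: cXL; done) || (apply: cTL; done)).
Qed.
Lemma cEEE p r s : p != r -> p != s -> GRing.comm (E p) (E r * E s).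
Proof.
move=> pr ps; rewrite /GRing.comm mulrA (Ea pr) mulNr -(mulrA (E r) (E p)) (Ea ps) mulrN opprK.
by rewrite mulrA.
Qed.
Lemma EEdisj p q r s : p != r -> p != s -> q != r -> q != s ->
  EE r s * EE p q = EE p q * EE r s.
Proof.
move=> pr ps qr qs; rewrite !EEE; apply: commrM; apply: commr_sym; exact: cEEE.
Qed.
Lemma EEswap p q r s : q != r -> EE p q * EE r s = - (EE p r * EE q s).
Proof.
move=> qr; rewrite !EEE !mulrA -(mulrA (E p)) (Ea qr) mulrN mulNr.
by rewrite !mulrA.
Qed.

Lemma PluckR i j a b : i != j -> i != a -> i != b -> j != a -> j != b -> a != b ->
  L i j * L a b = L i a * L j b - L j a * L i b.
Proof.
move=> ij ia ib ja jb ab; have := Pluck ij ia ib ja jb ab.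
move/eqP; rewrite -addrA addr_eq0 => /eqP ->; zsolve.
Qed.

Lemma C1 i j a b : i != j -> i != a -> i != b -> j != a -> j != b -> a != b ->
  ac (h i j) (h a b) + ac (h i a) (h j b) + ac (h j a) (h i b) = 0.
Proof.
move=> ij ia ib ja jb ab.
have ji : j != i by rewrite eq_sym. have ai : a != i by rewrite eq_sym.
have bi : b != i by rewrite eq_sym. have aj : a != j by rewrite eq_sym.
have bj : b != j by rewrite eq_sym. have ba : b != a by rewrite eq_sym.
rewrite !hE // !acMn2 !ac_EE; try exact: scalL.
rewrite (EEdisj ia ib ja jb) (EEdisj ij ib aj ab) (EEdisj ji jb ai ab).
rewrite -(Ldisj ia ib ja jb) -(Ldisj ij ib aj ab) -(Ldisj ji jb ai ab).
rewrite (EEswap _ _ aj) (EEswap _ _ ai) (EEa ij) !mulNr opprK.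
rewrite (PluckR ij ia ib ja jb ab) !mulrBr.
zsolve.
Qed.

Lemma K1 i a b : i != a -> a != b -> b != i ->
  L i a * L i b = L i b * L i a - N i * L a b.
Proof.
move=> ia ab bi; move/eqP: (Kp ia ab bi); rewrite -subr_eq0 => /eqP H.
by apply/eqP; rewrite -subr_eq0; apply/eqP; rewrite -H; zsolve.
Qed.
Lemma Lanti p q : L q p = - L p q.
Proof. by rewrite !LE opprB. Qed.
Lemma K2 i a b : i != a -> a != b -> b != i ->
  L a b * L i a = L i a * L a b - N a * L i b.
Proof.
move=> ia ab bi; have ai : a != i by rewrite eq_sym.
have ib : i != b by rewrite eq_sym. have ba : b != a by rewrite eq_sym.
move/eqP: (Kp ai ib ba); rewrite !(Lanti i a) mulrN mulNr opprK -subr_eq0 => /eqP H.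
by apply/eqP; rewrite -subr_eq0; apply/eqP; rewrite -H; zsolve.
Qed.
Lemma K3 i a b : i != a -> a != b -> b != i ->
  L i b * L a b = L a b * L i b - N b * L i a.
Proof.
move=> ia ab bi; have ba : b != a by rewrite eq_sym.
have ib : i != b by rewrite eq_sym.
move/eqP: (Kp bi ia ab); rewrite (Lanti i b) (Lanti a b) !(mulrN, mulNr) !opprK -subr_eq0 => /eqP H.
by apply/eqP; rewrite -subr_eq0; apply/eqP; rewrite -H; zsolve.
Qed.

Lemma C2 i a b : i != a -> a != b -> b != i ->
  ac (w i i) (h a b) + ac (h i a) (h i b) + ac (h i a) (w b b)
  + ac (h i a) (h a b) + ac (h i b) (w a a) + ac (h i b) (h a b) = 0.
Proof.
move=> ia ab bi.
have ai : a != i by rewrite eq_sym. have ib : i != b by rewrite eq_sym.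
have ba : b != a by rewrite eq_sym.
rewrite !wE !hE // (acC _ (N b)) (acC _ (N a)) !acMn2 !acMnr !ac_NEE; try exact: scalL;
  try (apply: cNL; by rewrite // eq_sym).
rewrite !ac_EE; try exact: scalL.
rewrite (EEfirst _ ia) (EEfirst _ ib) (EEa ab) (EEsame i a b) (EEcross ia ab bi).
rewrite (EElast _ ab) (EElast _ ib) (EEa ia).
rewrite (K1 ia ab bi) (K2 ia ab bi) (K3 ia ab bi).
rewrite !(mulrBr, mulNr, mulrN).
zsolve.
Qed.
End Alg.

End S2.

Module S3.
Import ZS.
Import S1.
Import S2.
Local Open Scope ring_scope.

Section Main.
Variables (R : realFieldType) (n : nat) (V : lmodType R).
Variables (mu : 'I_n -> R) (e : 'I_n -> {linear V -> V}).
Hypothesis hcl : clifford_rel e.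
Local Notation K := (lop n V).
Local Notation X := (@Xo R n V).
Local Notation T := (@To R n V mu).
Local Notation E := (@Eo R n V e).
Local Notation Ro := (@Ro R n V).
Local Notation w := (@w R n V mu e).
Local Notation h := (@h R n V mu e).
Local Notation ac := (@ac R n V).

Definition Xk (A : {set 'I_n}) : K := \sum_(i in A) E i * X i.
Definition Dk (A : {set 'I_n}) : K := \sum_(i in A) E i * T i.
Definition Rs (s : seq 'I_n) : K := \prod_(k <- s) Ro k.
Definition WW (A : {set 'I_n}) : K := \sum_(i in A) \sum_(j in A) w i j.
Definition M (A : {set 'I_n}) : K := Xk A * Dk A - Dk A * Xk A - 1.

Lemma EXc' i j : E i * X j = X j * E i. Proof. exact: S1.EXc. Qed.
Lemma ETc' i j : E i * T j = T j * E i. Proof. exact: S1.ETc. Qed.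
Lemma ERc' i j : E i * Ro j = Ro j * E i. Proof. exact: S1.ERc. Qed.

Lemma M_WW (A : {set 'I_n}) : M A = WW A - 1.
Proof.
rewrite /M /WW /Xk /Dk; congr (_ - _).
rewrite !mulr_suml -sumrB; apply: eq_bigr => i _.
rewrite !mulr_sumr -sumrB; apply: eq_bigr => j _.
rewrite wwE EEE mulrBr !mulrA -(mulrA (E i) (X i)) -(mulrA (E i) (T i)).
by rewrite -EXc' -ETc' !mulrA.
Qed.

Lemma Rs_c s (f : K) : (forall k, k \in s -> GRing.comm (Ro k) f) -> GRing.comm (Rs s) f.
Proof.
elim: s => [|k s IH] H; first by rewrite /Rs big_nil; apply: commr1.
rewrite /Rs big_cons; apply: commr_sym; apply: commrM; apply: commr_sym.
  by apply: H; rewrite inE eqxx.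
by apply: IH => k' hk'; apply: H; rewrite inE hk' orbT.
Qed.
Lemma Rs_a s (f : K) i : uniq s -> i \in s ->
  Ro i * f = - (f * Ro i) -> (forall k, k != i -> GRing.comm (Ro k) f) ->
  Rs s * f = - (f * Rs s).
Proof.
elim: s => [//|k s IH] /= /andP[ks us] ins ha hc.
rewrite /Rs !big_cons -/(Rs s).
move: ins; rewrite inE => /orP[/eqP ik|ins].
- subst k; have cs : GRing.comm (Rs s) f.
    apply: Rs_c => k hk; apply: hc; apply: contraNneq ks => <-; by [].
  by rewrite -mulrA cs mulrA ha mulNr -mulrA.
- have ki : k != i by apply: contraNneq ks => ->.
  by rewrite -mulrA (IH us ins ha hc) mulrN (mulrA (Ro k) f) (hc k ki) -mulrA.
Qed.
Lemma RRc' i j : Ro i * Ro j = Ro j * Ro i. Proof. exact: S1.RRc. Qed.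
Lemma RR1' i : Ro i * Ro i = 1. Proof. exact: S1.RR1. Qed.
Lemma Rs_sq s : Rs s * Rs s = 1.
Proof.
elim: s => [|k s IH]; first by rewrite /Rs big_nil mulr1.
rewrite /Rs big_cons -/(Rs s).
have c : GRing.comm (Ro k) (Rs s).
  by apply: commr_sym; apply: Rs_c => k' _; apply: RRc'.
by rewrite -mulrA (mulrA (Rs s)) -c -mulrA IH mulr1 RR1'.
Qed.

Lemma RsX (A : {set 'I_n}) i : i \in A -> Rs (enum A) * X i = - (X i * Rs (enum A)).
Proof.
move=> iA; apply: (Rs_a (i:=i)); rewrite ?enum_uniq ?mem_enum //.
  exact: S1.RXa.
by move=> k ki; apply: S1.RXc.
Qed.
Lemma RsT (A : {set 'I_n}) i : i \in A -> Rs (enum A) * T i = - (T i * Rs (enum A)).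
Proof.
move=> iA; apply: (Rs_a (i:=i)); rewrite ?enum_uniq ?mem_enum //.
  exact: S1.RTa.
by move=> k ki; apply: S1.RTc.
Qed.
Lemma RsE s i : GRing.comm (Rs s) (E i).
Proof. apply: Rs_c => k _; exact: esym (ERc' i k). Qed.

Lemma RsXk (A : {set 'I_n}) : Rs (enum A) * Xk A = - (Xk A * Rs (enum A)).
Proof.
rewrite /Xk mulr_sumr mulr_suml -sumrN; apply: eq_bigr => i iA.
by rewrite mulrA (RsE _ i) -mulrA RsX // mulrN !mulrA.
Qed.
Lemma RsDk (A : {set 'I_n}) : Rs (enum A) * Dk A = - (Dk A * Rs (enum A)).
Proof.
rewrite /Dk mulr_sumr mulr_suml -sumrN; apply: eq_bigr => i iA.
by rewrite mulrA (RsE _ i) -mulrA RsT // mulrN !mulrA.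
Qed.
Lemma RsM (A : {set 'I_n}) : GRing.comm (Rs (enum A)) (M A).
Proof.
rewrite /M /GRing.comm !mulrBr !mulrBl !mulr1 !mul1r !mulrA RsXk RsDk !mulNr.
by rewrite -!mulrA RsXk RsDk !mulrN !opprK.
Qed.

Lemma XkE (A : {set 'I_n}) G : (Xk A) G = XopA e A G.
Proof. by apply: funext => a; rewrite /Xk sumE. Qed.
Lemma DkE (A : {set 'I_n}) G : (Dk A) G = DopA mu e A G.
Proof. by apply: funext => a; rewrite /Dk sumE. Qed.
Lemma SopAE (A : {set 'I_n}) G : SopA mu e A G = fun a => 2^-1 *: (M A G a).
Proof.
apply: funext => a; rewrite /SopA /M; congr (_ *: _).
by rewrite -!DkE -!XkE -?DkE.
Qed.
Lemma reflAE (A : {set 'I_n}) F : reflA A F = (Rs (enum A)) F.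
Proof.
rewrite /reflA /Rs; elim: (enum A) => [|k s IH] /=; first by rewrite big_nil.
by rewrite big_cons IH.
Qed.
Lemma Gam2E (A : {set 'I_n}) F a : Gam2 mu e A F a = 2^-1 *: (2^-1 *: ((M A * M A) F a)).
Proof.
have GE : forall G, Gam mu e A G = fun b => 2^-1 *: ((M A * Rs (enum A)) G b).
  by move=> G; rewrite /Gam SopAE reflAE.
have GE' : forall G b, Gam mu e A G b = 2^-1 *: ((M A * Rs (enum A)) G b).
  by move=> G b; rewrite GE.
rewrite /Gam2 GE' (GE F) linZ; congr (_ *: (_ *: _)).
have -> : (M A * Rs (enum A)) ((M A * Rs (enum A)) F) a
  = ((M A * Rs (enum A)) * (M A * Rs (enum A))) F a by [].
by rewrite mulrA -(mulrA (M A)) RsM mulrA -mulrA Rs_sq mulr1.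
Qed.
End Main.

End S3.

Module S4.
Import ZS.
Import S1.
Import S2.
Import S3.
Local Open Scope ring_scope.

Lemma expand (K : pzRingType) (U A B p q y sab sPb sPab sPa : K) :
  sab = q + y + p -> sPb = U + B + q -> sPab = U + A + p + (y + B) + q ->
  sPa = U + A + p ->
  U * y + y * U + A * B + B * A + A * q + q * A + A * y + y * A + B * p + p * B + B * y + y * B = 0 ->
  (sab - 1) * (sab - 1) + (sPb - 1) * (sPb - 1)
  = (sPab - 1) * (sPab - 1) - (sPa - 1) * (sPa - 1) + (U - 1) * (U - 1)
    + (q - 1) * (q - 1) + (p - 1) * (p - 1) - 1.
Proof.
move=> -> -> -> -> HZ.
apply/eqP; rewrite -subr_eq0; apply/eqP; rewrite -[RHS](oppr0) -HZ.
rewrite !(mulrDl, mulrDr, mulrBl, mulrBr, mul1r, mulr1).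
zsolve.
Qed.

Section Fin.
Variables (R : realFieldType) (n : nat) (V : lmodType R).
Variables (mu : 'I_n -> R) (e : 'I_n -> {linear V -> V}).
Hypothesis hcl : clifford_rel e.
Local Notation K := (lop n V).
Local Notation w := (@w R n V mu e).
Local Notation h := (@h R n V mu e).
Local Notation ac := (@ac R n V).
Local Notation WW := (@WW R n V mu e).

Lemma WW1 k : WW [set k] = w k k.
Proof. by rewrite /WW !big_set1. Qed.
Lemma WWU k (A : {set 'I_n}) : k \notin A -> WW (k |: A) = WW A + \sum_(i in A) h i k + w k k.
Proof.
move=> kA; rewrite /WW.
under eq_bigr => i _ do rewrite (big_setU1 _ kA).
rewrite (big_setU1 _ kA) /=.
under [X in _ = _ + X + _]eq_bigr => i _ do rewrite hhE.
rewrite !big_split /=; zsolve.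
Qed.
Lemma hC i j : h i j = h j i. Proof. by rewrite !hhE addrC. Qed.

Lemma Kdouble (x : K) : x + x = 0 -> x = 0.
Proof.
move=> H; apply: lopE => F a; rewrite zeroE.
have : (x + x) F a = 0 by rewrite H.
rewrite addE -mulr2n -scaler_nat => /eqP; rewrite scaler_eq0 pnatr_eq0 /=.
by move/eqP.
Qed.

Lemma sym_sum (P : {set 'I_n}) (t : 'I_n -> 'I_n -> K) :
  (forall i j, i \in P -> j \in P -> i != j -> t i j + t j i = 0) ->
  \sum_(i in P) \sum_(j in P) t i j = \sum_(i in P) t i i.
Proof.
move=> Ht; apply/eqP; rewrite -subr_eq0; apply/eqP; apply: Kdouble.
have S2 : \sum_(i in P) \sum_(j in P) t i j + \sum_(i in P) \sum_(j in P) t i j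
   = \sum_(i in P) (t i i + t i i).
  rewrite [X in _ + X]exchange_big -big_split /=; apply: eq_bigr => i iP.
  rewrite -big_split /= (bigD1 i) //= big1 ?addr0 // => j /andP[jP ji].
  by apply: Ht; rewrite // eq_sym.
rewrite big_split /= in S2.
have -> : forall u v : K, u - v + (u - v) = (u + u) - (v + v) by move=> u v; zsolve.
by rewrite S2 subrr.
Qed.

Lemma ac_suml (P : {set 'I_n}) (f : 'I_n -> K) g :
  ac (\sum_(i in P) f i) g = \sum_(i in P) ac (f i) g.
Proof. by rewrite /ac mulr_suml mulr_sumr -big_split. Qed.
Lemma ac_sumr (P : {set 'I_n}) (f : 'I_n -> K) g :
  ac g (\sum_(i in P) f i) = \sum_(i in P) ac g (f i).
Proof. by rewrite /ac mulr_suml mulr_sumr -big_split. Qed.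
Lemma acDl x y z : ac (x + y) z = ac x z + ac y z.
Proof. rewrite /ac mulrDl mulrDr; zsolve. Qed.

Lemma toac (U A B p q y : K) :
  U * y + y * U + A * B + B * A + A * q + q * A + A * y + y * A + B * p + p * B + B * y + y * B
  = ac U y + ac A B + ac A q + ac A y + ac B p + ac B y.
Proof. rewrite /ac; zsolve. Qed.

Lemma Zzero (P : {set 'I_n}) a b : a != b -> a \notin P -> b \notin P ->
  ac (WW P) (h a b) + ac (\sum_(i in P) h i a) (\sum_(i in P) h i b)
  + ac (\sum_(i in P) h i a) (w b b) + ac (\sum_(i in P) h i a) (h a b)
  + ac (\sum_(i in P) h i b) (w a a) + ac (\sum_(i in P) h i b) (h a b) = 0.
Proof.
move=> ab aP bP.
rewrite /WW !ac_suml.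
under eq_bigr => i _ do rewrite ac_suml.
under [X in _ + X + _ + _ + _ + _]eq_bigr => i _ do rewrite ac_sumr.
rewrite -big_split /=.
under eq_bigr => i _ do rewrite -big_split /=.
rewrite sym_sum; last first.
  move=> i j iP jP ij; have ia : i != a by apply: contraNneq aP => <-.
  have ib : i != b by apply: contraNneq bP => <-.
  have ja : j != a by apply: contraNneq aP => <-.
  have jb : j != b by apply: contraNneq bP => <-.
  have := C1 mu hcl ij ia ib ja jb ab; rewrite hhE acDl; move=> <-; zsolve.
rewrite -!big_split /=; apply: big1 => i iP.
have ia : i != a by apply: contraNneq aP => <-.
have bi : b != i by apply: contraNneq bP => ->.
have := C2 mu hcl ia ab bi => <-; zsolve.
Qed.
End Fin.

End S4.

Import ZS.
Import S1.
Import S2.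
Import S3.
Import S4.

Lemma sc6 (R : realFieldType) (V : lmodType R) (x3 x4 x5 x6 x7 x8 : V) :
  4^-1 *: (x3 - x4 + x5 + x6 + x7 - x8)
  = 4^-1 *: x3 - 4^-1 *: x4 + 4^-1 *: x5 + 4^-1 *: x6 + 4^-1 *: x7 - 4^-1 *: x8.
Proof. by rewrite !scalerDr !scalerN. Qed.

Theorem lemma14 (R : realFieldType) (n : nat) (mu : 'I_n -> R)
  (V : lmodType R) (e : 'I_n -> {linear V -> V}) (l : nat)
  (hmu : forall i, 0 < mu i) (hcl : clifford_rel e)
  (hn : (3 <= n)%N) (hl1 : (1 <= l)%N) (hl2 : (l <= n - 2)%N)
  (F : elt n V) (hF : finsupp F) (a : mono n) :
  Gam2 mu e (sing1 n l.+1 :|: sing1 n l.+2) F a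
  + Gam2 mu e (setup n l.+2 :\: sing1 n l.+1) F a
  = Gam2 mu e (setup n l.+2) F a - Gam2 mu e (setup n l.+1) F a
    + Gam2 mu e (setup n l) F a + Gam2 mu e (sing1 n l.+2) F a
    + Gam2 mu e (sing1 n l.+1) F a - 4^-1 *: F a.
Proof.
have hb : (l.+1 < n)%N by lia.
have ha : (l < n)%N by lia.
pose ia : 'I_n := Ordinal ha. pose ib : 'I_n := Ordinal hb.
pose P := setup n l.
have e1 : sing1 n l.+1 = [set ia].
  by apply/setP => k; rewrite !inE -val_eqE.
have e2 : sing1 n l.+2 = [set ib].
  by apply/setP => k; rewrite !inE -val_eqE.
have e3 : setup n l.+1 = ia |: P.
  by apply/setP => k; rewrite !inE -val_eqE /= ltnS leq_eqVlt.
have e4 : setup n l.+2 = ib |: (ia |: P).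
  by apply/setP => k; rewrite !inE -!val_eqE /= ltnS leq_eqVlt ltnS leq_eqVlt.
have e5 : setup n l.+2 :\: sing1 n l.+1 = ib |: P.
  apply/setP => k; rewrite !inE -!val_eqE /=; case: k => k hk /=.
  by apply/idP/idP; lia.
have iaP : ia \notin P by rewrite inE ltnn.
have ibP : ib \notin P by rewrite inE ltnNge leqnSn.
have ibaP : ib \notin ia |: P by rewrite !inE -val_eqE /= ltnNge leqnSn orbF neq_ltn ltnSn orbT.
have iab : ia != ib by rewrite -val_eqE /= neq_ltn ltnSn.
have iab' : ia \notin [set ib] by rewrite inE.
rewrite e5 e1 e2 e3 e4 !(Gam2E mu e) !(M_WW mu e) !(WW1 mu e).
have h4 : forall v : V, 2^-1 *: (2^-1 *: v) = 4^-1 *: v.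
  by move=> v; rewrite scalerA -invfM -natrM.
rewrite !h4.
have k1 : WW mu e (ia |: [set ib]) = w mu e ib ib + h mu e ia ib + w mu e ia ia.
  by rewrite (WWU mu e iab') big_set1 (WW1 mu e) (hC mu e ib ia).
have k2 : WW mu e (ib |: P) = WW mu e P + \sum_(i in P) h mu e i ib + w mu e ib ib.
  by rewrite (WWU mu e ibP).
have k3 : WW mu e (ib |: (ia |: P)) = WW mu e P + \sum_(i in P) h mu e i ia + w mu e ia ia
   + (h mu e ia ib + \sum_(i in P) h mu e i ib) + w mu e ib ib.
  by rewrite (WWU mu e ibaP) (WWU mu e iaP) (big_setU1 _ iaP).
have k4 : WW mu e (ia |: P) = WW mu e P + \sum_(i in P) h mu e i ia + w mu e ia ia.
  by rewrite (WWU mu e iaP).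
have k5 := Zzero mu hcl iab iaP ibP.
rewrite -S4.toac in k5.
have key := expand k1 k2 k3 k4 k5.
have := congr1 (fun f : lop n V => f F a) key.
move=> H; cbv beta in H; rewrite !addE !oppE !oneE in H.
rewrite -scalerDr -scalerBr -scalerDr -scalerDr -scalerDr -scalerBr.
congr (_ *: _); exact: H.
Qed.
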